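(* For every discrete distribution $\mu$, $S[\mu]^2\le \frac13 M_2[\mu]\,M_0[\mu]^3$.
   Context: A discrete distribution is a finite set $\mu=\{(x_1,m_1),\dots,(x_k,m_k)\}$ with $x_i\in\mathbb R$ distinct and $m_i>0$. Its moments are $M_j[\mu]=\sum_i m_ix_i^j$. Its spread is $S[\mu]=\sum_{i<j}|x_i-x_j|\,m_im_j$. *)

(* Defs.v *)
(* A discrete distribution with k atoms is encoded by
   positions x : 'I_k -> R (pairwise distinct) and masses m : 'I_k -> R (> 0),
   over an arbitrary real field R. *)
From HB Require Import structures.
From mathcomp Require Import all_boot all_order all_algebra.
Set Implicit Arguments. Unset Strict Implicit. Unset Printing Implicit Defensive.
Import Order.TTheory GRing.Theory Num.Theory.
Local Open Scope ring_scope.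

Definition moment (R : realFieldType) (k : nat) (x m : 'I_k -> R) (j : nat) : R :=
  \sum_(i < k) m i * x i ^+ j.

Definition spread (R : realFieldType) (k : nat) (x m : 'I_k -> R) : R :=
  \sum_(i < k) \sum_(j < k | (i < j)%N) `|x i - x j| * m i * m j.

(* Main.v *)
Require Import Defs.
From HB Require Import structures.
From mathcomp Require Import all_boot all_order all_algebra.
Import Order.TTheory GRing.Theory Num.Theory.
Local Open Scope ring_scope.
Lemma key (R : realFieldType) (a b c : R) :
  Num.sg (a-b) * Num.sg (a-c) + Num.sg (b-a) * Num.sg (b-c) + Num.sg (c-a) * Num.sg (c-b) <= 1.
Proof.
rewrite -(opprB a b) -(opprB a c) -(opprB b c) !sgrN !sgrEz.
rewrite -!rmorphN -!rmorphM -!rmorphD.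
have -> : (1:R) = (1:int)%:~R by [].
rewrite ler_int.
by case: sgzP; case: sgzP; case: sgzP.
Qed.

Lemma sum_pairs (R : realFieldType) (k : nat) (g : 'I_k -> 'I_k -> R) :
  (forall i, g i i = 0) ->
  \sum_(i < k) \sum_(j < k) g i j = \sum_(i < k) \sum_(j < k | (i < j)%N) (g i j + g j i).
Proof.
move=> g0.
rewrite [RHS](eq_bigr (fun i : 'I_k => \sum_(j < k | (i < j)%N) g i j + \sum_(j < k | (i < j)%N) g j i)); last by move=> i _; rewrite big_split.
rewrite big_split /=.
have -> : \sum_(i < k) \sum_(j < k | (i < j)%N) g j i = \sum_(i < k) \sum_(j < k | (j < i)%N) g i j.
  under eq_bigr do rewrite big_mkcond /=.
  rewrite exchange_big /=.
  apply: eq_bigr => i _; rewrite [RHS]big_mkcond /=.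
  by apply: eq_bigr => j _.
rewrite -big_split /=; apply: eq_bigr => i _.
rewrite [in RHS]big_mkcond [X in _ + X]big_mkcond -big_split /=.
apply: eq_bigr => j _.
case: ltngtP => [_|_|eij]; rewrite ?addr0 ?add0r //.
by rewrite (val_inj eij) g0.
Qed.

Lemma cs (R : realFieldType) (k : nat) (w a b : 'I_k -> R) :
  (forall i, 0 <= w i) ->
  (\sum_i w i * a i * b i) ^+ 2 <= (\sum_i w i * a i ^+ 2) * (\sum_i w i * b i ^+ 2).
Proof.
move=> w0.
set A := \sum_i _ * a i ^+ 2; set B := \sum_i _ * b i ^+ 2; set C := \sum_i _.
have h : 0 <= \sum_i \sum_j w i * w j * (a i * b j - a j * b i) ^+ 2.
  by apply: sumr_ge0 => i _; apply: sumr_ge0 => j _; by rewrite mulr_ge0 ?sqr_ge0 ?mulr_ge0.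
have e : forall i j, w i * w j * (a i * b j - a j * b i) ^+ 2 =
   (w i * a i ^+ 2) * (w j * b j ^+ 2) + (w j * a j ^+ 2) * (w i * b i ^+ 2)
   - (w i * a i * b i) * (w j * a j * b j) *+ 2.
  move=> i j; rewrite sqrrB !exprMn mulrDr mulrBr.
  rewrite addrAC; congr (_ + _ - _).
  - by rewrite mulrACA.
  - by rewrite [w i * w j]mulrC mulrACA.
  rewrite mulrnAr; congr (_ *+ 2); rewrite -!mulrA; congr (w i * _).
  rewrite mulrCA; congr (a i * _).
  rewrite [RHS]mulrCA; congr (w j * _).
  by rewrite mulrCA [RHS]mulrCA [b i * _]mulrC.
have : \sum_i \sum_j w i * w j * (a i * b j - a j * b i) ^+ 2 = A * B + A * B - C * C *+ 2.
  under eq_bigr do under eq_bigr do rewrite e.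
  have s1 : forall (u v : 'I_k -> R), \sum_i \sum_j u i * v j = (\sum_i u i) * (\sum_j v j).
    by move=> u v; rewrite mulr_suml; apply: eq_bigr => i _; rewrite mulr_sumr.
  under eq_bigr do rewrite sumrB big_split /= sumrMnl.
  rewrite sumrB big_split /= sumrMnl.
  rewrite (s1 (fun i => w i * a i ^+ 2) (fun j => w j * b j ^+ 2)).
  rewrite exchange_big /= (s1 (fun i => w i * a i ^+ 2) (fun j => w j * b j ^+ 2)).
  by rewrite (s1 (fun i => w i * a i * b i) (fun j => w j * a j * b j)).
move=> E; rewrite E subr_ge0 in h.
by rewrite -mulr2n lerMn2r /= -expr2 in h.
Qed.

Theorem mainTheorem5 (R : realFieldType) (k : nat) (x m : 'I_k -> R)
  (hx : injective x) (hm : forall i, 0 < m i) :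
  spread x m ^+ 2 <= 3^-1 * moment x m 2 * moment x m 0 ^+ 3.
Proof.
pose c := fun i => \sum_(j < k) m j * Num.sg (x i - x j).
have hS : spread x m = \sum_i m i * x i * c i.
  rewrite /spread.
  have -> : \sum_i m i * x i * c i = \sum_i \sum_j (m i * x i * (m j * Num.sg (x i - x j))).
    by apply: eq_bigr => i _; rewrite /c mulr_sumr.
  rewrite sum_pairs; last by move=> i; rewrite subrr sgr0 !mulr0.
  apply: eq_bigr => i _; apply: eq_bigr => j _.
  rewrite -(opprB (x i)) sgrN normrEsg.
  set s := Num.sg _.
  rewrite mulrBr !mulrBl !mulrN; congr (_ - _).
    rewrite [RHS]mulrA [RHS]mulrC -!mulrA; congr (s * _).
    by rewrite [RHS]mulrA -[RHS]mulrA mulrCA.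
  rewrite [RHS]mulrA [RHS]mulrC -!mulrA; congr (s * _).
  by rewrite [RHS]mulrCA [m j * m i]mulrC.
have hm0 : forall i, 0 <= m i by move=> i; exact: ltW.
have hCS := @cs R k m x c hm0.
rewrite -hS in hCS.
pose L := \sum_i m i * c i ^+ 2.
pose T := fun i j l => m i * m j * m l * (Num.sg (x i - x j) * Num.sg (x i - x l)).
have eL : L = \sum_i \sum_j \sum_l T i j l.
  apply: eq_bigr => i _; rewrite /c expr2 mulr_suml mulr_sumr.
  apply: eq_bigr => j _; rewrite mulr_sumr mulr_sumr.
  apply: eq_bigr => l _; rewrite /T.
  by rewrite mulrACA !mulrA.
have eL2 : L = \sum_i \sum_j \sum_l T j i l by rewrite eL exchange_big.
have eL3 : L = \sum_i \sum_j \sum_l T l i j.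
  rewrite eL; under [RHS]eq_bigr do rewrite exchange_big.
  by rewrite [RHS]exchange_big.
have eM0 : moment x m 0 = \sum_i m i.
  by rewrite /moment; apply: eq_bigr => i _; rewrite expr0 mulr1.
have eM : moment x m 0 ^+ 3 = \sum_i \sum_j \sum_l m i * m j * m l.
  rewrite eM0 -[3%N]/(1 + 2)%N exprD expr1 expr2 mulrA mulr_suml mulr_suml.
  apply: eq_bigr => i _; rewrite -mulrA mulr_suml mulr_sumr.
  by apply: eq_bigr => j _; rewrite mulrA mulr_sumr.
have h3 : L + L + L <= moment x m 0 ^+ 3.
  rewrite {1}eL {1}eL2 eL3 eM -!big_split /=.
  apply: ler_sum => i _; rewrite -!big_split /=.
  apply: ler_sum => j _; rewrite -!big_split /=.
  apply: ler_sum => l _; rewrite /T.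
  rewrite [m j * m i]mulrC [m l * m i]mulrC [m i * m l * m j]mulrAC -!mulrDr.
  rewrite -[X in _ <= X]mulr1; apply: ler_wpM2l; first by rewrite !mulr_ge0.
  exact: key.
have e3 : L + L + L = 3%:R * L by rewrite mulr_natl !mulrS mulr0n addr0 addrA.
have hL : L <= 3^-1 * moment x m 0 ^+ 3.
  rewrite -[L](@mulKf _ 3%:R) ?pnatr_eq0 // -e3.
  by apply: ler_wpM2l => //; rewrite invr_ge0 ler0n.
have hM2 : 0 <= moment x m 2.
  by apply: sumr_ge0 => i _; rewrite mulr_ge0 ?sqr_ge0.
apply: le_trans hCS _.
rewrite [3^-1 * _]mulrC -mulrA; exact: ler_wpM2l.
Qed.
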